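(* Assume $\mathfrak{b}<\mathfrak{q}$. Then there exists a compact Hausdorff sequentially separable space which is not selectively sequentially separable.
   Context: $\mathfrak{b}$ is the least cardinality of a subset of $\mathbb{N}^{\mathbb{N}}$ unbounded with respect to $\leq^*$, where $f\leq^* g$ means $f(n)\leq g(n)$ for all but finitely many $n$. A $Q$-set is a subset of $\mathbb{R}$ every subset of which is a $G_\delta$ in it; $\mathfrak{q}$ is the least cardinal $\lambda$ such that there is no $Q$-set of size $\lambda$ (equivalently, the smallest cardinal such that for every $\kappa<\mathfrak{q}$ there is a $Q$-set of size $\kappa$). A space is sequentially separable if it has a countable sequentially dense subset (every point is a limit of a sequence from it). A space $Z$ is selectively sequentially separable if for every sequence $(D_n:n\in\mathbb{N})$ of sequentially dense subsets of $Z$ one can choose finite $F_n\subseteq D_n$ so that $\bigcup_n F_n$ is sequentially dense in $Z$. *)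

(* Defs.v *)
From HB Require Import structures.
From mathcomp Require Import all_boot all_order all_algebra.
From mathcomp Require Import all_classical all_reals all_analysis.
Set Implicit Arguments. Unset Strict Implicit. Unset Printing Implicit Defensive.
Import Order.TTheory GRing.Theory Num.Theory.
Import numFieldNormedType.Exports.
Local Open Scope classical_set_scope.
Local Open Scope card_scope.

Definition le_star (f g : nat -> nat) : Prop :=
  exists N : nat, forall n, (N <= n)%N -> (f n <= g n)%N.

Definition unbounded_family (F : set (nat -> nat)) : Prop :=
  ~ exists g : nat -> nat, forall f, F f -> le_star f g.

Definition Qset (R : realType) (X : set R) : Prop :=
  forall Y : set R, Y `<=` X ->
    exists U : nat -> set R, (forall n, @open R (U n)) /\
      Y = X `&` \bigcap_n U n.

(* With b the least cardinality of an unbounded family and q the least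
   cardinal lambda with no Q-set of size lambda, b < q means: every cardinal
   lambda <= b is the size of some Q-set.  Cardinals lambda <= b are the sizes
   of subsets of an unbounded family F of minimal size. *)
Definition b_lt_q (R : realType) : Prop :=
  exists F : set (nat -> nat),
    [/\ unbounded_family F,
        (forall G, unbounded_family G -> (F #<= G)) &
        (forall S, S `<=` F -> exists X : set R, Qset X /\ (S #= X))].

Definition seq_dense (Z : topologicalType) (D : set Z) : Prop :=
  forall z : Z, exists u : nat -> Z, (forall n, D (u n)) /\ (u @ \oo --> z).

Definition seq_separable (Z : topologicalType) : Prop :=
  exists D : set Z, countable D /\ seq_dense D.

Definition sel_seq_separable (Z : topologicalType) : Prop :=
  forall Ds : nat -> set Z, (forall n, seq_dense (Ds n)) ->
    exists Fs : nat -> set Z,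
      (forall n, finite_set (Fs n) /\ Fs n `<=` Ds n) /\
      seq_dense (\bigcup_n Fs n).

(* Main.v *)
Require Import Defs.
From HB Require Import structures.
From mathcomp Require Import all_boot all_order all_algebra.
From mathcomp Require Import all_classical all_reals all_analysis.
Import Order.TTheory GRing.Theory Num.Theory.
Import numFieldNormedType.Exports.
Local Open Scope classical_set_scope.
Local Open Scope ring_scope.

Definition Bq (R : realType) (j : nat) : set R :=
  match (unpickle j : option (rat * rat)) with
  | Some (a, b) => [set y | ratr a < y < ratr b]
  | None => set0 end.

Lemma Bq_basis (R : realType) (U : set R) (x : R) :
  open U -> U x -> exists j, Bq R j x /\ Bq R j `<=` U.
Proof.
rewrite openE => oU Ux.
have := oU x Ux; rewrite /interior => /nbhs_ballP [e /= e0 sub].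
have lt1 : x - e < x by rewrite ltrBlDr ltrDl.
have lt2 : x < x + e by rewrite ltrDl.
have [a] := rat_in_itvoo lt1.
rewrite in_itv /= => /andP [ha1 ha2].
have [b] := rat_in_itvoo lt2.
rewrite in_itv /= => /andP [hb1 hb2].
exists (pickle (a, b)); rewrite /Bq pickleK; split.
  by rewrite /= ha2 hb1.
move=> y /= /andP [h1 h2]; apply: sub.
rewrite ball_itv /= in_itv /=; apply/andP; split.
  exact: lt_trans ha1 h1.
exact: lt_trans h2 hb2.
Qed.

Local Open Scope nat_scope.
Definition Os (R : realType) (s : seq nat) : set R :=
  fun x => exists2 j, j \in s & Bq R j x.

Definition code := (nat * seq (seq nat) * seq (seq nat))%type.

Definition Wc (R : realType) (c : code) : set R :=
  let '(k, a, b) := c in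
  fun x => exists n, [/\ n <= k, ~ Os R (nth [::] a n) x &
                        forall m, m < n -> Os R (nth [::] b m) x].

Definition approx (R : realType) (U : nat -> set R) (k : nat) : seq (seq nat) :=
  [seq [seq j <- iota 0 k | `[< Bq R j `<=` U n >]] | n <- iota 0 k.+1].

Lemma Os_approx (R : realType) (U : nat -> set R) k n x : n <= k ->
  Os R (nth [::] (approx R U k) n) x <->
  exists j, [/\ j < k, Bq R j `<=` U n & Bq R j x].
Proof.
move=> nk; rewrite /approx (nth_map 0) ?size_iota ?ltnS // nth_iota ?ltnS //.
rewrite add0n; split.
  move=> [j]; rewrite mem_filter mem_iota add0n => /andP [/asboolP h1 /andP [_ h2]] h3.
  by exists j.
move=> [j [h1 h2 h3]]; exists j => //.
by rewrite mem_filter mem_iota add0n leq0n h1 andbT /=; rewrite andbT; apply/asboolP.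
Qed.

Lemma Os_approx_sub (R : realType) (U : nat -> set R) k n x : n <= k ->
  Os R (nth [::] (approx R U k) n) x -> U n x.
Proof. by move=> nk /(Os_approx _ _ _ _ _ nk) [j [_ h1 h2]]; apply: h1. Qed.

Lemma eventually_geP (P : nat -> Prop) :
  (\forall k \near \oo, P k) <-> exists K, forall k, K <= k -> P k.
Proof.
split; first by move=> [K _ HK]; exists K.
by move=> [K HK]; exists K.
Qed.

Lemma Os_approx_ev (R : realType) (U : nat -> set R) n x :
  open (U n) -> U n x -> \forall k \near \oo, Os R (nth [::] (approx R U k) n) x.
Proof.
move=> oU Ux; have [j [Bj BU]] := Bq_basis _ _ _ oU Ux.
apply/eventually_geP; exists (maxn n j.+1) => k; rewrite geq_max => /andP [h1 h2].
by apply/(Os_approx _ _ _ _ _ h1); exists j.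
Qed.

Lemma near_forall_lt (P : nat -> nat -> Prop) n :
  (forall m, m < n -> \forall k \near \oo, P m k) ->
  \forall k \near \oo, forall m, m < n -> P m k.
Proof.
elim: n => [|n IH] H; first by apply: nearW => k m.
have h1 := IH (fun m lt => H m (ltnW (leq_trans lt (leqnn n.+1)))).
have h2 := H n (ltnSn n).
apply: filterS (filterI h1 h2) => k [A B] m.
by rewrite ltnS leq_eqVlt => /orP [/eqP -> // | /A].
Qed.

Definition chiW (R : realType) (X : set R) (c : code) :
  {classic {x : R | X x}} -> bool := fun i => `[< Wc R c (proj1_sig i) >].

Lemma sig_inj (R : realType) (X : set R) (i i' : {classic {x : R | X x}}) :
  proj1_sig i = proj1_sig i' -> i = i'.
Proof.
case: i => x px; case: i' => y py /= exy; subst y.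
by rewrite (Prop_irrelevance px py).
Qed.

Lemma Qset_limit (R : realType) (X : set R) : Qset X ->
  forall z : {classic {x : R | X x}} -> bool,
  exists c : nat -> code, forall i, \forall k \near \oo, chiW R X (c k) i = z i.
Proof.
move=> QX z.
pose Y' := [set x | exists i : {classic {x : R | X x}}, proj1_sig i = x /\ z i].
have Y'X : Y' `<=` X by move=> x [i [<- _]]; exact: proj2_sig i.
have [V [oV eV]] := QX Y' Y'X.
have [U [oU eU]] := QX (X `\` Y') (@subDsetl _ X Y').
exists (fun k => (k, approx R U k, approx R V k)) => i.
pose x := proj1_sig i; have Xx : X x := proj2_sig i.
case zi: (z i).
- have Y'x : Y' x by exists i.
  have HV : forall m, V m x.
    by move=> m; have := Y'x; rewrite eV => -[_]; apply.
  have [n nU] : exists n, ~ U n x.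
    apply/existsNP => HU.
    have : (X `&` \bigcap_n U n) x by split => // n _; exact: HU.
    by rewrite -eU => -[].
  have ev1 := near_forall_lt (fun m k => Os R (nth [::] (approx R V k) m) x) n
     (fun m _ => Os_approx_ev _ _ _ _ (oV m) (HV m)).
  have ev2 : \forall k \near \oo, n <= k by apply/eventually_geP; exists n.
  apply: filterS (filterI ev1 ev2) => k [h1 h2].
  rewrite /chiW; apply/asboolP; exists n; split => //.
  by move/(Os_approx_sub _ _ _ _ _ h2).
- have nY'x : ~ Y' x.
    by move=> [i' [/sig_inj ei' zi']]; move: zi; rewrite -ei' zi'.
  have HU : forall n, U n x.
    by move=> n; have : (X `\` Y') x by []; rewrite eU => -[_]; apply.
  have [m0 nV] : exists m0, ~ V m0 x.
    apply/existsNP => HV.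
    have : (X `&` \bigcap_n V n) x by split => // n _; exact: HV.
    by rewrite -eV.
  have ev1 := near_forall_lt (fun n k => Os R (nth [::] (approx R U k) n) x) m0.+1
     (fun n _ => Os_approx_ev _ _ _ _ (oU n) (HU n)).
  apply: filterS ev1 => k h1.
  rewrite /chiW; apply/asboolPn => -[n [nk nO hm]].
  case: (leqP n m0) => hn.
    by apply: nO; apply: h1; rewrite ltnS.
  apply: nV; apply: (Os_approx_sub _ _ _ _ _ _ (hm _ hn)).
  exact: leq_trans (ltnW hn) nk.
Qed.

Fixpoint maxupto (g : nat -> nat) (n : nat) : nat :=
  if n is n'.+1 then maxn (maxupto g n') (g n) else g 0.

Lemma maxupto_ge g n i : i <= n -> g i <= maxupto g n.
Proof.
elim: n => [|n IH] /=; first by rewrite leqn0 => /eqP ->.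
rewrite leq_eqVlt => /orP [/eqP -> | ]; first by rewrite leq_max leqnn orbT.
by rewrite ltnS => /IH h; rewrite leq_max h.
Qed.

Lemma finite_bound (T : Type) (A : set T) (Q : T -> nat -> Prop) :
  finite_set A -> (forall a M M', M <= M' -> Q a M -> Q a M') ->
  (forall a, A a -> exists M, Q a M) -> exists M, forall a, A a -> Q a M.
Proof.
move=> /(@finite_seqP {classic T}) [s ->] mono H.
elim: s H => [|a s IH] H; first by exists 0.
have [M1 HM1] := H a (mem_head a s).
have [M2 HM2] : exists M, forall b, [set` s] b -> Q b M.
  by apply: IH => b bs; apply: H; rewrite /= in_cons bs orbT.
exists (maxn M1 M2) => b /=; rewrite in_cons => /orP [/eqP -> | bs].
  by apply: mono HM1; rewrite leq_maxl.
by apply: (mono _ M2); [rewrite leq_maxr | exact: HM2].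
Qed.
Lemma ptws_cvg_of (I : Type) (u : nat -> I -> bool) (z : I -> bool) :
  (forall i, \forall k \near \oo, u k i = z i) ->
  u @ \oo --> (z : prod_topology (fun _ : I => bool)).
Proof.
move=> H.
apply/cvg_sup => i U [V] [[W] oW <-] WfN WU.
apply: (filterS WU); rewrite nbhs_simpl.
apply: filterS (H i) => k /= ->; exact: WfN.
Qed.
Lemma ptws_cvg_to (I : Type) (u : nat -> I -> bool) (z : I -> bool) :
  u @ \oo --> (z : prod_topology (fun _ : I => bool)) ->
  (forall i, \forall k \near \oo, u k i = z i).
Proof.
move=> /cvg_sup H i.
have := H i [set f : I -> bool | f i = z i].
apply.
rewrite nbhsE /=. exists ((fun f : I -> bool => f i) @^-1` [set z i]); last by [].
split => //.
exists [set z i]; first exact: discrete_open.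
by [].
Qed.
Lemma Zcompact (J : Type) : compact [set: prod_topology (fun _ : {classic J} => bool)].
Proof.
have := @tychonoff {classic J} (fun _ => bool) (fun _ => setT) (fun _ => bool_compact).
by congr compact; apply/seteqP; split.
Qed.

Lemma Zhaus (J : Type) : hausdorff_space (prod_topology (fun _ : {classic J} => bool)).
Proof.
apply: hausdorff_product => x. exact: discrete_hausdorff.
Qed.

Theorem theorem5p1 (R : realType) :
  b_lt_q R ->
  exists Z : topologicalType,
    [/\ compact [set: Z], hausdorff_space Z, seq_separable Z
      & ~ sel_seq_separable Z].
Proof.
move=> [F [unbF _ Hsub]].
have [X [QX FX]] := Hsub F (@subset_refl _ F).
have FleX : (F #<= X)%card by have /card_eqPle [] := FX.
have /injfunPex [psi psiF psiI] := pcard_leP FleX.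
have Hex : forall x : R, exists f : nat -> nat, (exists g, F g /\ psi g = x) -> F f /\ psi f = x.
  move=> x; have [[g Hg]|nH] := pselect (exists g, F g /\ psi g = x); first by exists g.
  by exists (fun _ => 0%N) => /nH.
have [phi Hphi] := choice Hex.
have phiK : forall f, F f -> phi (psi f) = f.
  move=> f Ff; have [Ff' e] := Hphi (psi f) (ex_intro _ f (conj Ff erefl)).
  by apply: psiI; [exact: mem_set | exact: mem_set | exact: e].
pose I := {classic {x : R | X x}}.
have [n0 Hn0] : exists n0, forall m, exists i : I, m <= phi (proj1_sig i) n0.
  apply: contrapT => H; apply: unbF.
  have H' : forall n0, exists m, forall i : I, phi (proj1_sig i) n0 < m.
    move=> n0; move/forallNP: H => /(_ n0) /existsNP [m Hm]; exists m => i.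
    by rewrite ltnNge; apply/negP => hle; apply: Hm; exists i.
  have [b Hb] := choice H'; exists b => f Ff; exists 0 => n _.
  have := Hb n (exist _ (psi f) (psiF f Ff)); rewrite /= phiK //; exact: ltnW.
pose phiI (i : I) := phi (proj1_sig i).
pose Pb (i : I) N m := has (fun j => m <= phiI i j) (iota 0 N.+1).
pose hfun (d : I -> bool) n m : I -> bool := fun i => d i && ~~ Pb i (n + n0) m.
pose chi := chiW R X.
pose Dn n := [set h : I -> bool | exists c m, h = hfun (chi c) n m].
pose Z := prod_topology (fun _ : I => bool).
exists Z; split.
- exact: Zcompact.
- exact: Zhaus.
- exists (range chi); split.
    exact: sub_countable (card_image_le _ _) (countableP _).
  move=> z; have [c Hc] := Qset_limit _ _ QX z.
  exists (fun k => chi (c k)); split; first by move=> n; exists (c n).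
  exact: ptws_cvg_of.
move=> Hsel.
have DnD : forall n, seq_dense (Dn n : set Z).
  move=> n z; have [c Hc] := Qset_limit _ _ QX z.
  exists (fun k => hfun (chi (c k)) n k); split; first by move=> k; exists (c k), k.
  apply: ptws_cvg_of => i.
  have ev : \forall k \near \oo, Pb i (n + n0) k = false.
    apply/eventually_geP; exists (maxupto (phiI i) (n + n0)).+1 => k hk.
    apply/hasPn => j; rewrite mem_iota add0n => /andP [_ hj].
    rewrite -ltnNge; apply: leq_ltn_trans hk; apply: maxupto_ge.
    by rewrite -ltnS.
  apply: filterS (filterI (Hc i) ev) => k [h1 h2].
  by rewrite /hfun h2 andbT.
have [Fs [HF Hd]] := Hsel Dn DnD.
have Hg : forall n, exists M, forall h, Fs n h ->
    exists c m, m <= M /\ h = hfun (chi c) n m.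
  move=> n; apply: finite_bound; first exact: (HF n).1.
    by move=> h M M' MM' [c [m [mM ->]]]; exists c, m; split => //; exact: leq_trans MM'.
  by move=> h /((HF n).2) [c [m ->]]; exists m, c, m.
have [g Hgg] := choice Hg.
have [u [Hu Hcv]] := Hd (fun _ => true).
have Hpt := ptws_cvg_to _ _ _ Hcv.
have Hnk : forall k, exists n, Fs n (u k) by move=> k; have [n _ Fn] := Hu k; exists n.
have [nk Hnkk] := choice Hnk.
have KF : forall k i j, j <= nk k + n0 -> g (nk k) <= phiI i j -> u k i = false.
  move=> k i j hj hg; have [c [m [mg ->]]] := Hgg _ _ (Hnkk k).
  rewrite /hfun; suff -> : Pb i (nk k + n0) m by rewrite andbF.
  apply/hasP; exists j; first by rewrite mem_iota add0n ltnS hj.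
  exact: leq_trans mg hg.
have [[N HN] | HN] := pselect (exists N, forall k, nk k <= N).
  have [i Hi] := Hn0 (maxupto g N).
  have [K HK] := (eventually_geP _).1 (Hpt i).
  have := HK K (leqnn K).
  rewrite (KF K i n0) //; first by rewrite leq_addl.
  apply: leq_trans Hi; exact: maxupto_ge (HN K).
have HB : forall N, exists k, N <= nk k.
  move=> N; apply: contrapT => hN; apply: HN; exists N => k.
  by rewrite leqNgt; apply/negP => hk; apply: hN; exists k; exact: ltnW.
have [kap Hkap] := choice HB.
pose G n := g (nk (kap n)).
have [f [Ff nle]] : exists f, F f /\ ~ le_star f G.
  apply: contrapT => H; apply: unbF; exists G => f Ff.
  by apply: contrapT => nle; apply: H; exists f.
pose i : I := exist _ (psi f) (psiF f Ff).
have phii : phiI i = f by rewrite /phiI /= phiK.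
have [K HK] := (eventually_geP _).1 (Hpt i).
pose L := maxupto nk K.
have [n [Ln fn]] : exists n, L < n /\ G n < f n.
  apply: contrapT => H; apply: nle; exists L.+1 => n Ln.
  by rewrite leqNgt; apply/negP => fn; apply: H; exists n.
pose k := kap n.
have nkk : n <= nk k := Hkap n.
have Kk : K <= k.
  rewrite leqNgt; apply/negP => kK.
  have := maxupto_ge nk K k (ltnW kK); rewrite -/L => h.
  by have := leq_trans (leq_trans Ln nkk) h; rewrite ltnn.
have := HK k Kk; rewrite (KF k i n) //.
  exact: leq_trans nkk (leq_addr _ _).
by rewrite phii; exact: ltnW.
Qed.
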